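(* Assume (A2) and (A3), and work in the dynamic Lanczos setting. Then for every $j=1,\dots,m$, $$A_1Q_j=Q_jT_j+\beta_{j+1}q_{j+1}e_j^\top+\delta Q'_j,$$ where $\delta Q'_j=[\delta q'_1,\dots,\delta q'_j]$ satisfies $\|\delta q'_i\|\le L_{gyy}\tilde\varepsilon_j$ for $i=1,\dots,j$.
   Context: Let $f,g:\mathbb{R}^{d_x}\times\mathbb{R}^{d_y}\to\mathbb{R}$ be twice continuously differentiable; norms are Euclidean/spectral and $\|(x,y)\|:=(\|x\|^2+\|y\|^2)^{1/2}$. (A2): $\nabla_xg,\nabla_yg$ are $L_{gx}$-, $L_{gy}$-Lipschitz and $\nabla^2_{xy}g,\nabla^2_{yy}g$ are $L_{gxy}$-, $L_{gyy}$-Lipschitz. (A3): $g(x,\cdot)$ is $\mu_g$-strongly convex for every $x$, $\mu_g>0$. Dynamic Lanczos setting: fix $x_1,\dots,x_m\in\mathbb{R}^{d_x}$, $y_1,\dots,y_m\in\mathbb{R}^{d_y}$, $A_i:=\nabla^2_{yy}g(x_i,y_i)$, $\bar b\ne0$. Set $q_0=0$, $\beta_1=0$, $q_1=\bar b/\|\bar b\|$, and $u_i=A_iq_i-\beta_iq_{i-1}$, $\alpha_i=q_i^\top u_i$, $\omega_i=u_i-\alpha_iq_i$, $\beta_{i+1}=\|\omega_i\|$, $q_{i+1}=\omega_i/\beta_{i+1}$ (assume $\beta_{i+1}\ne0$). $Q_j:=[q_1,\dots,q_j]$; $T_j$ is the $j\times j$ symmetric tridiagonal matrix with diagonal $\alpha_1,\dots,\alpha_j$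 and off-diagonal $\beta_2,\dots,\beta_j$; $e_j$ is the $j$-th standard basis vector. $\tilde\varepsilon_j:=\max_{1\le s,t\le j}\big(\|x_s-x_t\|+\|y_s-y_t\|\big)$. *)

(* Defs.v *)
From HB Require Import structures.
From mathcomp Require Import all_boot all_order all_algebra.
From mathcomp Require Import all_classical all_reals all_analysis.
Set Implicit Arguments. Unset Strict Implicit. Unset Printing Implicit Defensive.
Import Order.TTheory GRing.Theory Num.Theory.
Import numFieldNormedType.Exports.
Local Open Scope classical_set_scope.
Local Open Scope ring_scope.

Section Defs.
Variable R : realType.

Definition enorm (d : nat) (v : 'cV[R]_d) : R := Num.sqrt (\sum_i v i 0 ^+ 2).

Definition pnorm (dx dy : nat) (x : 'cV[R]_dx) (y : 'cV[R]_dy) : R :=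
  Num.sqrt (enorm x ^+ 2 + enorm y ^+ 2).

Definition specnorm (m n : nat) (A : 'M[R]_(m, n)) : R :=
  sup [set enorm (A *m v) | v in [set v : 'cV[R]_n | enorm v <= 1]].

Definition ebase (d : nat) (k : 'I_d) : 'cV[R]_d := delta_mx k 0.

Variables dx dy : nat.
Implicit Types (g : 'cV[R]_dx -> 'cV[R]_dy -> R) (x : 'cV[R]_dx) (y : 'cV[R]_dy).

Definition unc g : 'cV[R]_dx * 'cV[R]_dy -> R := fun z => g z.1 z.2.

Definition dirx (k : 'I_dx) : 'cV[R]_dx * 'cV[R]_dy := (ebase k, 0).
Definition diry (k : 'I_dy) : 'cV[R]_dx * 'cV[R]_dy := (0, ebase k).

Definition gradx g x y : 'cV[R]_dx := \col_k 'D_(dirx k) (unc g) (x, y).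
Definition grady g x y : 'cV[R]_dy := \col_k 'D_(diry k) (unc g) (x, y).
Definition hessxy g x y : 'M[R]_(dx, dy) :=
  \matrix_(k, l) 'D_(dirx k) ('D_(diry l) (unc g)) (x, y).
Definition hessyy g x y : 'M[R]_(dy, dy) :=
  \matrix_(k, l) 'D_(diry k) ('D_(diry l) (unc g)) (x, y).

Definition C2 g : Prop :=
  (forall z, differentiable (unc g) z) /\
  (forall u z, differentiable ('D_u (unc g)) z) /\
  (forall u v, continuous ('D_v ('D_u (unc g)))).

Definition assumption_A2 g (Lgx Lgy Lgxy Lgyy : R) : Prop :=
  (forall x y x' y', enorm (gradx g x y - gradx g x' y') <= Lgx * pnorm (x - x') (y - y')) /\
  (forall x y x' y', enorm (grady g x y - grady g x' y') <= Lgy * pnorm (x - x') (y - y')) /\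
  (forall x y x' y', specnorm (hessxy g x y - hessxy g x' y') <= Lgxy * pnorm (x - x') (y - y')) /\
  (forall x y x' y', specnorm (hessyy g x y - hessyy g x' y') <= Lgyy * pnorm (x - x') (y - y')).

Definition assumption_A3 g (mu : R) : Prop :=
  0 < mu /\
  forall x y y' (t : R), 0 <= t <= 1 ->
    g x (t *: y + (1 - t) *: y') <=
      t * g x y + (1 - t) * g x y' - mu / 2 * t * (1 - t) * enorm (y - y') ^+ 2.
End Defs.

Section Lanczos.
Variables (R : realType) (d : nat) (A : nat -> 'M[R]_d) (b : 'cV[R]_d).

Definition lz_u (Ai : 'M[R]_d) (qp qc : 'cV[R]_d) (bc : R) : 'cV[R]_d := Ai *m qc - bc *: qp.
Definition lz_alpha (qc u : 'cV[R]_d) : R := (qc^T *m u) 0 0.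
Definition lz_omega (qc u : 'cV[R]_d) : 'cV[R]_d := u - lz_alpha qc u *: qc.

(* lz_state n = (q_n, q_{n+1}, beta_{n+1}), with q_0 = 0, beta_1 = 0,
   q_1 = b/||b||, and A_i used at index i *)
Fixpoint lz_state (n : nat) : 'cV[R]_d * 'cV[R]_d * R :=
  match n with
  | 0 => (0, (enorm b)^-1 *: b, 0)
  | n'.+1 =>
      let: (qp, qc, bc) := lz_state n' in
      let u := lz_u (A n'.+1) qp qc bc in
      let om := lz_omega qc u in
      let bn := enorm om in
      (qc, bn^-1 *: om, bn)
  end.

(* q_i (i >= 0), beta_i (i >= 1), alpha_i (i >= 1) *)
Definition lq (i : nat) : 'cV[R]_d := if i is i'.+1 then (lz_state i').1.2 else 0.
Definition lbeta (i : nat) : R := (lz_state i.-1).2.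
Definition lalpha (i : nat) : R := lz_alpha (lq i) (lz_u (A i) (lq i.-1) (lq i) (lbeta i)).

Definition lQ (j : nat) : 'M[R]_(d, j) := \matrix_(r, c) lq c.+1 r 0.
Definition lT (j : nat) : 'M[R]_j :=
  \matrix_(k, l)
    if k == l then lalpha k.+1
    else if (l == k.+1 :> nat) || (k == l.+1 :> nat) then lbeta (maxn k l).+1
    else 0.
End Lanczos.

Definition erowT (R : realType) (j : nat) : 'rV[R]_j := \row_(c < j) ((c == j.-1 :> nat)%:R).

Definition eps_tilde (R : realType) (dx dy : nat) (x : nat -> 'cV[R]_dx) (y : nat -> 'cV[R]_dy)
  (j : nat) : R :=
  \big[Num.max/0]_(1 <= s < j.+1) \big[Num.max/0]_(1 <= t < j.+1)
     (enorm (x s - x t) + enorm (y s - y t)).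

(* Main.v *)
Require Import Defs.
From HB Require Import structures.
From mathcomp Require Import all_boot all_order all_algebra.
From mathcomp Require Import all_classical all_reals all_analysis.
From mathcomp Require Import ring lra zify.
Import Order.TTheory GRing.Theory Num.Theory.
Local Open Scope ring_scope.

Section H.

Variable R : realType.

Lemma enorm_ge0 d (v : 'cV[R]_d) : 0 <= enorm v.
Proof. exact: sqrtr_ge0. Qed.

Lemma coord_le_enorm d (v : 'cV[R]_d) l : `|v l 0| <= enorm v.
Proof.
rewrite /enorm -sqrtr_sqr ler_sqrt; last by apply: sumr_ge0 => i _; apply: sqr_ge0.
rewrite (bigD1 l) //= lerDl; apply: sumr_ge0 => i _; apply: sqr_ge0.
Qed.

Lemma enorm_dom d (v : 'cV[R]_d) (u : 'I_d -> R) :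
  (forall k, `|v k 0| <= u k) -> enorm v <= Num.sqrt (\sum_k u k ^+ 2).
Proof.
move=> H; rewrite /enorm ler_sqrt; last by apply: sumr_ge0 => i _; apply: sqr_ge0.
apply: ler_sum => k _; rewrite -real_normK ?num_real //.
apply: lerXn2r => //; rewrite ?nnegrE //; apply: le_trans (H k) => //.
Qed.

Lemma enormZ d (v : 'cV[R]_d) (c : R) : enorm (c *: v) = `|c| * enorm v.
Proof.
rewrite /enorm -sqrtr_sqr -sqrtrM ?sqr_ge0 // mulr_sumr; congr Num.sqrt.
by apply: eq_bigr => i _; rewrite mxE exprMn.
Qed.

Lemma enorm_eq0 d (v : 'cV[R]_d) : enorm v = 0 -> v = 0.
Proof.
move=> /eqP; rewrite sqrtr_eq0 => H.
have H0 : \sum_i v i 0 ^+ 2 = 0.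
  by apply/eqP; rewrite eq_le H /=; apply: sumr_ge0 => i _; apply: sqr_ge0.
apply/matrixP => i z; rewrite (ord1 z) mxE.
have := psumr_eq0P (fun i _ => sqr_ge0 (v i 0)) H0 (i:=i) isT.
by move/eqP; rewrite sqrf_eq0 => /eqP.
Qed.

Lemma specnorm_ub d (M : 'M[R]_d) (v : 'cV[R]_d) :
  enorm v <= 1 -> enorm (M *m v) <= specnorm M.
Proof.
move=> Hv; rewrite /specnorm; apply: sup_upper_bound; last by exists v.
split; first by exists (enorm (M *m v)), v.
exists (Num.sqrt (\sum_k (\sum_l `|M k l|) ^+ 2)) => _ [w Hw <-].
apply: enorm_dom => k; rewrite mxE.
apply: (le_trans (ler_norm_sum _ _ _)); apply: ler_sum => l _.
rewrite normrM -[X in _ <= X]mulr1; apply: ler_wpM2l => //.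
have := coord_le_enorm _ w l; move: Hw => /= Hw H; exact: le_trans H Hw.
Qed.

Lemma specnorm_ge0 d (M : 'M[R]_d) : 0 <= specnorm M.
Proof.
have -> : 0 = enorm (M *m (0 : 'cV[R]_d)).
  by rewrite mulmx0 /enorm big1 ?sqrtr0 // => i _; rewrite mxE expr0n.
apply: specnorm_ub; rewrite /enorm big1 ?sqrtr0 ?ler01 // => i _; by rewrite mxE expr0n.
Qed.

Lemma enorm_le_pnorm dx dy (a : 'cV[R]_dx) (b : 'cV[R]_dy) : enorm a <= pnorm a b.
Proof.
rewrite /pnorm -[X in X <= _]ger0_norm ?enorm_ge0 // -sqrtr_sqr ler_sqrt.
  have := sqr_ge0 (enorm b); lra.
by rewrite addr_ge0 ?sqr_ge0.
Qed.

Lemma pnorm_le dx dy (a : 'cV[R]_dx) (b : 'cV[R]_dy) : pnorm a b <= enorm a + enorm b.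
Proof.
have ha := enorm_ge0 _ a; have hb := enorm_ge0 _ b.
rewrite /pnorm -[X in _ <= X]ger0_norm ?addr_ge0 // -sqrtr_sqr ler_sqrt.
  rewrite sqrrD; have := mulr_ge0 ha hb; lra.
by rewrite sqr_ge0.
Qed.

Lemma bigmax_ge (r : seq nat) (F : nat -> R) a :
  a \in r -> F a <= \big[Num.max/0]_(i <- r) F i.
Proof.
elim: r => //= b r IH; rewrite in_cons big_cons le_max => /orP[/eqP->|/IH->].
  by rewrite lexx.
by rewrite orbT.
Qed.

Lemma bigmax_le0 (r : seq nat) (F : nat -> R) :
  (forall a, a \in r -> F a <= 0) -> \big[Num.max/0]_(i <- r) F i <= 0.
Proof.
elim: r => [|b r IH] H; first by rewrite big_nil.
rewrite big_cons ge_max H ?mem_head //= IH // => a Ha; apply: H; by rewrite in_cons Ha orbT.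
Qed.


Lemma enorm_le_pnorm2 dx dy (a : 'cV[R]_dx) (b : 'cV[R]_dy) : enorm b <= pnorm a b.
Proof.
rewrite /pnorm -[X in X <= _]ger0_norm ?enorm_ge0 // -sqrtr_sqr ler_sqrt.
  have := sqr_ge0 (enorm a); lra.
by rewrite addr_ge0 ?sqr_ge0.
Qed.
End H.

Lemma zsplit (V : zmodType) (x p q : V) : x = p + q + (x - p - q).
Proof. by rewrite -(addrA x) -opprD addrC addNKr. Qed.

Section L.
Variables (R : realType) (d : nat) (A : nat -> 'M[R]_d) (b : 'cV[R]_d).

Lemma state11 n : (lz_state A b n).1.1 = lq A b n.
Proof.
case: n => [|n] //=; rewrite /lq.
by case: (lz_state A b n) => [[qp qc] bc].
Qed.

Definition omg n := lz_omega (lq A b n.+1) (lz_u (A n.+1) (lq A b n) (lq A b n.+1) (lbeta A b n.+1)).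

Lemma lqSS n : lq A b n.+2 = (lbeta A b n.+2)^-1 *: omg n /\ lbeta A b n.+2 = enorm (omg n).
Proof.
rewrite /omg /lbeta /= -state11 /lq /=.
by case: (lz_state A b n) => [[qp qc] bc].
Qed.

Lemma lq1 : lq A b 1 = (enorm b)^-1 *: b.
Proof. by []. Qed.

Lemma recur n : lbeta A b n.+2 != 0 ->
  A n.+1 *m lq A b n.+1 = lbeta A b n.+1 *: lq A b n + lalpha A b n.+1 *: lq A b n.+1
     + lbeta A b n.+2 *: lq A b n.+2.
Proof.
move=> Hb; have [-> _] := lqSS n.
rewrite scalerA mulfV // scale1r /omg /lz_omega /lz_u /lalpha /=.
exact: zsplit.
Qed.

End L.


Lemma sum_ind (R : pzRingType) j a (F : nat -> R) :
  \sum_(k < j) (((k : nat) == a)%:R * F k) = (a < j)%:R * F a.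
Proof.
elim: j => [|j IH]; first by rewrite big_ord0 mul0r.
rewrite big_ord_recr /= IH.
have [->|ne] := eqVneq a j.
  by rewrite ltnn ltnSn mul0r add0r.
have -> : (a < j.+1)%N = (a < j)%N by rewrite ltnS leq_eqVlt (negbTE ne).
by rewrite mul0r addr0.
Qed.

Lemma sum_indR (R : comPzRingType) j a (F : nat -> R) x :
  \sum_(k < j) (F k * (((k : nat) == a)%:R * x)) = (a < j)%:R * (F a * x).
Proof.
rewrite -(sum_ind _ _ _ (fun n => F n * x)); apply: eq_bigr => k _.
by rewrite mulrCA.
Qed.

Lemma sum_indS (R : comPzRingType) j c (F : nat -> R) x : (c <= j)%N ->
  \sum_(k < j) (F k.+1 * (((k.+1 : nat) == c)%:R * x)) = F c * x - (c == 0)%:R * (F 0 * x).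
Proof.
case: c => [|c] Hc.
  by rewrite big1 ?mul1r ?subrr // => i _; rewrite mul0r mulr0.
rewrite mul0r subr0.
under eq_bigr => k _ do rewrite eqSS.
by rewrite (sum_indR _ _ _ (fun n => F n.+1)) Hc mul1r.
Qed.

Section L.
Variables (R : realType) (d : nat) (A : nat -> 'M[R]_d) (b : 'cV[R]_d).

Lemma Tentry j (k c : 'I_j) : lT A b j k c =
  ((k : nat) == c)%:R * lalpha A b c.+1 + ((k.+1 == c))%:R * lbeta A b c.+1
  + ((k : nat) == c.+1)%:R * lbeta A b c.+2.
Proof.
rewrite mxE -val_eqE /=.
case: k c => [a Ha] [c Hc] /=.
have [->|ne] := eqVneq a c.
  by rewrite (gtn_eqF (ltnSn c)) (ltn_eqF (ltnSn c)) /= !(mul0r, mul1r, addr0, add0r).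
have [E1|n1] := eqVneq c a.+1.
  rewrite E1 /= (maxn_idPr (leqnSn a)) (ltn_eqF (leqW (ltnSn a))) /=.
  by rewrite !(mul0r, mul1r, addr0, add0r).
rewrite /=.
have [E2|n2] := eqVneq a c.+1.
  rewrite E2 /= (maxn_idPl (leqnSn c)).
  by rewrite !(mul0r, mul1r, addr0, add0r).
by rewrite /= !(mul0r, mul1r, addr0, add0r).
Qed.

End L.

Arguments lq : simpl never.
Section L2.
Variables (R : realType) (d : nat) (A : nat -> 'M[R]_d) (b : 'cV[R]_d).

Lemma QTcol j (c : 'I_j) : col c (lQ A b j *m lT A b j) =
  lbeta A b c.+1 *: lq A b c + lalpha A b c.+1 *: lq A b c.+1
  + ((c.+1 < j)%:R * lbeta A b c.+2) *: lq A b c.+2.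
Proof.
apply/matrixP => r z; rewrite (ord1 z) !mxE.
under eq_bigr => k _ do rewrite mxE Tentry !mulrDr.
rewrite !big_split.
case: c => [c Hc] /=.
rewrite (sum_indR _ j c (fun n => lq A b n.+1 r 0) (lalpha A b c.+1)).
rewrite (sum_indR _ j c.+1 (fun n => lq A b n.+1 r 0) (lbeta A b c.+2)).
rewrite (sum_indS _ j c (fun n => lq A b n r 0) (lbeta A b c.+1)); last exact: ltnW.
have -> : lq A b 0 r 0 = 0 by rewrite /lq mxE.
have -> : (c < j)%:R = 1 :> R by rewrite Hc.
rewrite !mul0r mulr0 subr0; ring.
Qed.

End L2.

Section L3.
Variables (R : realType) (d : nat) (A : nat -> 'M[R]_d) (b : 'cV[R]_d).

Lemma colQ j (c : 'I_j) : col c (lQ A b j) = lq A b c.+1.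
Proof. by apply/matrixP => r z; rewrite (ord1 z) !mxE. Qed.

Lemma colE_row j (q : 'cV[R]_d) (c : 'I_j) :
  col c (q *m erowT R j) = ((c : nat) == j.-1)%:R *: q.
Proof.
apply/matrixP => r z; rewrite (ord1 z) !mxE big_ord1 !mxE.
by rewrite mulrC.
Qed.

Lemma colAQ j (M : 'M[R]_d) (c : 'I_j) : col c (M *m lQ A b j) = M *m lq A b c.+1.
Proof. by rewrite colE -mulmxA -colE colQ. Qed.

Lemma lq_norm m : b != 0 -> (forall i, (1 <= i <= m)%N -> lbeta A b i.+1 != 0) ->
  forall n, (n <= m)%N -> enorm (lq A b n.+1) <= 1.
Proof.
move=> Hb Hbeta [|n] Hn.
  rewrite lq1 enormZ normfV ger0_norm ?enorm_ge0 // mulVf //.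
  by apply/eqP => /enorm_eq0 E; move: Hb; rewrite E eqxx.
have [-> Eb] := lqSS _ _ A b n.
have Hn' := Hbeta n.+1 Hn.
by rewrite enormZ -Eb normfV ger0_norm ?mulVf // Eb enorm_ge0.
Qed.
End L3.

Theorem lemmaG1 (R : realType) (dx dy m : nat)
  (g : 'cV[R]_dx -> 'cV[R]_dy -> R) (Lgx Lgy Lgxy Lgyy mu : R)
  (x : nat -> 'cV[R]_dx) (y : nat -> 'cV[R]_dy) (b : 'cV[R]_dy) :
  C2 g ->
  assumption_A2 g Lgx Lgy Lgxy Lgyy ->
  assumption_A3 g mu ->
  b != 0 ->
  (forall i, (1 <= i <= m)%N ->
     lbeta (fun k => hessyy g (x k) (y k)) b i.+1 != 0) ->
  let A := fun k => hessyy g (x k) (y k) in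
  forall j : nat, (1 <= j <= m)%N ->
    exists dQ : 'M[R]_(dy, j),
      A 1%N *m lQ A b j =
        lQ A b j *m lT A b j + lbeta A b j.+1 *: (lq A b j.+1 *m erowT R j) + dQ
      /\ forall i : 'I_j, enorm (col i dQ) <= Lgyy * eps_tilde x y j.
Proof.
move=> _ [_ [_ [_ HL]]] _ Hb Hbeta A j /andP[Hj1 Hjm].
exists (A 1%N *m lQ A b j - lQ A b j *m lT A b j - lbeta A b j.+1 *: (lq A b j.+1 *m erowT R j)).
split; first exact: zsplit.
move=> i.
have Hi := ltn_ord i.
have Hbi : lbeta A b i.+2 != 0.
  apply: Hbeta; apply/andP; split => //; exact: leq_trans Hi Hjm.
have Hcol : col i (A 1%N *m lQ A b j - lQ A b j *m lT A b j
     - lbeta A b j.+1 *: (lq A b j.+1 *m erowT R j)) = (A 1%N - A i.+1) *m lq A b i.+1.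
  rewrite colE !mulmxBl scalemxAl -!colE colAQ QTcol colE_row.
  have E := recur _ _ A b i Hbi; clearbody A; rewrite E.
  case: (ltnP i.+1 j) => Hij.
    have -> : ((i : nat) == j.-1) = false by apply/eqP; lia.
    by rewrite /= scale0r subr0 mul1r.
  have -> : ((i : nat) == j.-1) = true by apply/eqP; lia.
  have -> : j.+1 = i.+2 by lia.
  rewrite /= mul0r scale0r addr0 scale1r.
  by rewrite [in RHS]opprD addrA.
rewrite Hcol.
have Hq : enorm (lq A b i.+1) <= 1.
  apply: (lq_norm _ _ A b m Hb Hbeta); lia.
have H1 := specnorm_ub _ _ (A 1%N - A i.+1) _ Hq.
have H2 := HL (x 1%N) (y 1%N) (x i.+1) (y i.+1).
have Hs0 := specnorm_ge0 _ _ (A 1%N - A i.+1).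
set p := pnorm (x 1%N - x i.+1) (y 1%N - y i.+1) in H2.
have Hp0 : 0 <= p.
  exact: le_trans (enorm_ge0 _ _ _) (enorm_le_pnorm _ _ _ _ _).
have Hpe : p <= eps_tilde x y j.
  apply: le_trans (pnorm_le _ _ _ _ _) _.
  rewrite /eps_tilde.
  apply: le_trans _ (bigmax_ge _ _ _ 1%N _); last by rewrite mem_index_iota.
  apply: (bigmax_ge _ _ (fun t => enorm (x 1%N - x t) + enorm (y 1%N - y t)) i.+1).
  by rewrite mem_index_iota /= ltnS.
have HA : A 1%N - A i.+1 = hessyy g (x 1%N) (y 1%N) - hessyy g (x i.+1) (y i.+1) by [].
rewrite HA in H1 Hs0.
case: (leP 0 Lgyy) => HLg.
  apply: le_trans H1 _; apply: le_trans H2 _.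
  by apply: ler_wpM2l.
have He : eps_tilde x y j <= 0.
  apply: bigmax_le0 => s _; apply: bigmax_le0 => t _.
  have H3 := HL (x s) (y s) (x t) (y t).
  have H4 := specnorm_ge0 _ _ (hessyy g (x s) (y s) - hessyy g (x t) (y t)).
  have H5 := enorm_le_pnorm _ _ _ (x s - x t) (y s - y t).
  have H6 := enorm_le_pnorm2 _ _ _ (x s - x t) (y s - y t).
  set q := pnorm (x s - x t) (y s - y t) in H3 H5 H6.
  have Hq0 : q <= 0 by rewrite -(nmulr_rge0 _ HLg); exact: le_trans H4 H3.
  apply: le_trans (lerD H5 H6) _; rewrite -(addr0 0); exact: lerD.
apply: le_trans H1 _; apply: le_trans H2 _.
apply: ler_wnM2l; first exact: ltW.
exact: le_trans He Hp0.
Qed.
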